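(* Let $G=\vec{C}_5^{1,2}$, fix $n\ge 2$ and $a\in\mathbb Z_5$. For a word $w=(\varepsilon_1,\dots,\varepsilon_n)\in\{1,2\}^n$ let $e_w=e_{a,\,a+\varepsilon_1,\,a+\varepsilon_1+\varepsilon_2,\,\ldots,\,a+\varepsilon_1+\cdots+\varepsilon_n}$ (mod $5$); these are exactly the allowed $n$-paths starting at $a$, and they span $A_n(a)$. Let $\Omega_n(a):=\Omega_n(G)\cap A_n(a)$. If $P=\sum_w c_w e_w\in\Omega_n(a)$, then: (1) $c_w=0$ whenever $w$ contains two consecutive letters $22$; (2) whenever $w$ and $w'$ differ only by exchanging an adjacent pair $12\leftrightarrow 21$ at positions $j,j+1$ (all other letters equal), $c_w+c_{w'}=0$; (3) consequently $c_w=0$ for every $w$ containing at least two letters $2$, and the coefficients of all words containing exactly one letter $2$ are determined by a single scalar. In particular $\dim_{\mathbb K}\Omega_n(a)\le 2$.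
   Context: GLMY path complex. Let $\mathbb K$ be a field of characteristic $0$ and $V$ a finite set. An elementary $n$-path is a sequence $(v_0,\dots,v_n)$, written $e_{v_0\cdots v_n}$; $\partial e_{v_0\cdots v_n}=\sum_{j=0}^n(-1)^j e_{v_0\cdots\widehat{v_j}\cdots v_n}$. Regular paths: elementary paths with $v_{k-1}=v_k$ for some $k$ are set to $0$. For a loopless digraph $G=(V,E)$, $A_n(G)$ is the span of elementary paths with $(v_k\to v_{k+1})\in E$ for all $k$; $\Omega_0=A_0$, $\Omega_1=A_1$, $\Omega_n(G)=\{u\in A_n(G):\partial u\in A_{n-1}(G)\}$ for $n\ge2$. The circulant digraph $\vec C_5^{1,2}$ has vertex set $\mathbb Z_5$ and arrows $a\to a+1$, $a\to a+2$ for all $a$. *)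

(* Defs.v *)
From HB Require Import structures.
From mathcomp Require Import all_boot all_order all_algebra.
Set Implicit Arguments. Unset Strict Implicit. Unset Printing Implicit Defensive.
Import Order.TTheory GRing.Theory Num.Theory.
Local Open Scope ring_scope.

(* An n-chain is a function u : seq V -> K (coefficient of each elementary
   path), finitely supported automatically since V is finite and we require
   support on paths of length n.+1. Non-regular elementary paths are 0 in the
   regular path space, so chains are supported on regular paths and the
   boundary drops non-regular terms. *)

Section GLMY.
Variables (K : fieldType) (V : finType).

Definition regular (s : seq V) : bool :=
  if s is x :: s' then path (fun a b => a != b) x s' else false.

Definition allowed (E : rel V) (s : seq V) : bool :=
  if s is x :: s' then path E x s' else false.

Definition ins (j : nat) (x : V) (t : seq V) : seq V :=
  take j t ++ x :: drop j t.

Definition in_A (E : rel V) (n : nat) (u : seq V -> K) : Prop :=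
  forall s, u s != 0 -> size s = n.+1 /\ allowed E s.

(* boundary on regular chains:
   d e_{v0..vm} = sum_j (-1)^j e_{v0..^vj..vm}, non-regular terms set to 0;
   the coefficient of t in d u is sum_j sum_x (-1)^j u(t with x inserted at j) *)
Definition bd (u : seq V -> K) : seq V -> K := fun t =>
  if regular t then
    \sum_(j < (size t).+1) \sum_(x : V) (-1) ^+ j * u (ins j x t)
  else 0.

Definition in_Omega (E : rel V) (n : nat) (u : seq V -> K) : Prop :=
  in_A E n u /\ ((2 <= n)%N -> in_A E n.-1 (bd u)).

Definition in_Omega_at (E : rel V) (n : nat) (a : V) (u : seq V -> K) : Prop :=
  in_Omega E n u /\ (forall s, u s != 0 -> head a s = a).

End GLMY.

Definition Z5 := 'Z_5.
Definition C512 : rel Z5 := fun u v => (v == u + 1) || (v == u + 2).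

Definition word (n : nat) (w : seq nat) : Prop :=
  size w = n /\ all (fun e => (e == 1)%N || (e == 2)%N) w.

Definition epath (a : Z5) (w : seq nat) : seq Z5 :=
  a :: scanl (fun v (e : nat) => v + e%:R) a w.

(* Main.v *)
Require Import Defs.
From HB Require Import structures.
From mathcomp Require Import all_boot all_order all_algebra.
From mathcomp Require Import zify.
Import Order.TTheory GRing.Theory Num.Theory.
Local Open Scope ring_scope.

Ltac z5c x := case: x => [[|[|[|[|[|?]]]]] ?] //.

Lemma C512_neq (x y : Z5) : C512 x y -> x != y.
Proof. z5c x; z5c y. Qed.

Lemma pathz_cat (r : rel Z5) l1 x l2 :
  (if l1 ++ x :: l2 is h :: t then path r h t else false) =
  (if rcons l1 x is h :: t then path r h t else false) && path r x l2.
Proof. case: l1 => [|h t] //=; by rewrite cat_path rcons_path /= andbA. Qed.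

Lemma allowed_cat (l1 : seq Z5) x l2 :
  allowed C512 (l1 ++ x :: l2) = allowed C512 (rcons l1 x) && path C512 x l2.
Proof. exact: (pathz_cat C512 l1 x l2). Qed.

Lemma regular_cat (l1 : seq Z5) x l2 :
  regular (l1 ++ x :: l2) = regular (rcons l1 x) && path (fun a b => a != b) x l2.
Proof. exact: (pathz_cat (fun a b => a != b) l1 x l2). Qed.

Lemma allowed_regular s : allowed C512 s -> regular s.
Proof. case: s => //= x s; apply: sub_path => y z; exact: C512_neq. Qed.

Lemma OmegaZ (K : fieldType) n (P : seq Z5 -> K) :
  in_Omega C512 n P -> forall s, ~~ allowed C512 s -> P s = 0.
Proof.
move=> HP s ns; apply/eqP/negPn/negP => /(proj1 HP s) [_ h].
by rewrite h in ns.
Qed.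

Arguments OmegaZ {K n P}.

Lemma take_catl' (T : Type) j (p s : seq T) : (j <= size p)%N ->
  take j (p ++ s) = take j p.
Proof. elim: p j => [|h p IH] [|j] hj //=; [by rewrite take0 | by rewrite IH]. Qed.
Lemma drop_catl' (T : Type) j (p s : seq T) : (j <= size p)%N ->
  drop j (p ++ s) = drop j p ++ s.
Proof. elim: p j => [|h p IH] [|j] hj //=; [by rewrite drop0 | by rewrite IH]. Qed.

Lemma take_catr' (T : Type) m (p s : seq T) :
  take (size p + m) (p ++ s) = p ++ take m s.
Proof. by elim: p => //= h p ->. Qed.

Lemma drop_catr' (T : Type) m (p s : seq T) :
  drop (size p + m) (p ++ s) = drop m s.
Proof. by elim: p. Qed.

Lemma ins_other j x p1 (b y : Z5) q : j != (size p1).+1 ->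
  exists l1 l2, ins j x (p1 ++ b :: y :: q) = l1 ++ b :: y :: l2.
Proof.
move=> hj; rewrite /ins.
case: (ltnP j (size p1).+1) => Hj.
  exists (take j p1 ++ x :: drop j p1), q.
  by rewrite take_catl' // drop_catl' // -catA.
have [k ->] : exists k, j = (size p1 + (2 + k))%N by exists (j - size p1 - 2)%N; lia.
rewrite take_catr' drop_catr' /=.
by exists p1, (take k q ++ x :: drop k q); rewrite -catA.
Qed.

Lemma face_sum (K : fieldType) n (P : seq Z5 -> K) (HP : in_Omega C512 n P)
  (hn : (2 <= n)%N) p1 (b y : Z5) q :
  ~~ C512 b y -> b != y -> \sum_(x : Z5) P (p1 ++ b :: x :: y :: q) = 0.
Proof.
move=> nby neby.
set t := p1 ++ b :: y :: q.
have Hbd : bd P t = 0.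
  apply/eqP/negPn/negP => /((proj2 HP) hn t) [_ h].
  by rewrite /t allowed_cat /= (negbTE nby) andbF in h.
case: (boolP (regular t)) => rt; last first.
  apply: big1 => x _; apply: (OmegaZ HP); apply: contra rt => h.
  move: h; rewrite allowed_cat /= => /andP[/allowed_regular r1 /andP[_ /andP[_ pq]]].
  rewrite /t regular_cat /= r1 neby /=.
  by apply: sub_path pq => u v; apply: C512_neq.
move: Hbd; rewrite /bd rt.
have hj : ((size p1).+1 < (size t).+1)%N by rewrite /t size_cat /=; lia.
rewrite (bigD1 (Ordinal hj)) //= [X in _ + X]big1; last first.
  move=> j hj'; apply: big1 => x _.
  have hjn : (val j != (size p1).+1).
    by apply: contra hj' => /eqP e; apply/eqP/val_inj.
  have [l1 [l2 ->]] := ins_other _ x p1 b y q hjn.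
  rewrite (OmegaZ HP) ?mulr0 //.
  by rewrite allowed_cat /= (negbTE nby) andbF.
rewrite addr0 -mulr_sumr => /eqP; rewrite mulf_eq0 signr_eq0 /= => /eqP Hs; rewrite -[RHS]Hs.
apply: eq_bigr => x _; rewrite /ins.
have -> : (size p1).+1 = (size p1 + 1)%N by rewrite addn1.
by rewrite take_catr' drop_catr' /= -catA.
Qed.

Definition stp (v : Z5) (e : nat) : Z5 := v + e%:R.

Lemma last_scanl x w : last x (scanl stp x w) = foldl stp x w.
Proof. by elim: w x => //= e w IH x; exact: IH. Qed.

Lemma epath_split a u e1 e2 v : epath a (u ++ e1 :: e2 :: v) =
  belast a (scanl stp a u) ++ foldl stp a u :: (foldl stp a u + e1%:R) ::
  (foldl stp a u + e1%:R + e2%:R) :: scanl stp (foldl stp a u + e1%:R + e2%:R) v.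
Proof.
rewrite /epath -/stp scanl_cat -cat_cons (lastI a (scanl stp a u)) -cats1 -catA.
by rewrite last_scanl.
Qed.

Arguments face_sum {K n P}.

Lemma brute22 (b x : Z5) : (x != b + 2%:R) -> ~~ (C512 b x && C512 x (b + 2%:R + 2%:R)).
Proof. z5c b; z5c x. Qed.
Lemma brute22b (b : Z5) : ~~ C512 b (b + 2%:R + 2%:R) && (b != b + 2%:R + 2%:R).
Proof. z5c b. Qed.
Lemma brute12 (b x : Z5) : (x != b + 1%:R) -> (x != b + 2%:R) ->
   ~~ (C512 b x && C512 x (b + 1%:R + 2%:R)).
Proof. z5c b; z5c x. Qed.
Lemma brute12b (b : Z5) : [&& ~~ C512 b (b + 1%:R + 2%:R), (b != b + 1%:R + 2%:R) &
   (b + 2%:R != b + 1%:R)].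
Proof. z5c b. Qed.

Lemma swap22 (K : fieldType) n (P : seq Z5 -> K) (HP : in_Omega C512 n P)
  (hn : (2 <= n)%N) a u v : P (epath a (u ++ [:: 2%N; 2%N] ++ v)) = 0.
Proof.
rewrite /= epath_split.
set b := foldl stp a u; set p1 := belast _ _; set q := scanl _ _ v.
have /andP[h1 h2] := brute22b b.
have := face_sum HP hn p1 b _ q h1 h2.
rewrite (bigD1 (b + 2%:R)) //= big1 ?addr0 // => x hx.
apply: (OmegaZ HP); rewrite allowed_cat /=.
apply/negP => /andP[_ /andP[e1 /andP[e2 _]]].
by move: (brute22 _ _ hx); rewrite e1 e2.
Qed.

Lemma swap12 (K : fieldType) n (P : seq Z5 -> K) (HP : in_Omega C512 n P)
  (hn : (2 <= n)%N) a u v :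
  P (epath a (u ++ [:: 1%N; 2%N] ++ v)) + P (epath a (u ++ [:: 2%N; 1%N] ++ v)) = 0.
Proof.
rewrite /= !epath_split.
set b := foldl stp a u; set p1 := belast _ _.
have -> : b + 2%:R + 1%:R = b + 1%:R + 2%:R by rewrite addrAC.
set q := scanl _ _ v.
have /and3P[h1 h2 h3] := brute12b b.
have := face_sum HP hn p1 b _ q h1 h2.
rewrite (bigD1 (b + 1%:R)) // (bigD1 (b + 2%:R)) ?h3 // big1; last first.
  move=> x /andP[/andP[_ hx1] hx2].
apply: (OmegaZ HP); rewrite allowed_cat /=.
apply/negP => /andP[_ /andP[e1 /andP[e2 _]]].
by move: (brute12 _ _ hx1 hx2); rewrite e1 e2.
by move=> H; rewrite -[RHS]H /= addr0.
Qed.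

Section Comb.
Variables (K : fieldType) (c : seq nat -> K).
Hypothesis h22 : forall u v, c (u ++ [:: 2%N; 2%N] ++ v) = 0.
Hypothesis h12 : forall u v,
  c (u ++ [:: 1%N; 2%N] ++ v) + c (u ++ [:: 2%N; 1%N] ++ v) = 0.

Lemma comb_a k : forall u v, c (u ++ 2%N :: nseq k 1%N ++ 2%N :: v) = 0.
Proof.
elim: k => [|k IH] u v; first exact: h22.
move: (h12 u (nseq k 1%N ++ 2%N :: v)).
rewrite (_ : u ++ [:: 1%N; 2%N] ++ _ = rcons u 1%N ++ 2%N :: nseq k 1%N ++ 2%N :: v).
  by rewrite IH add0r.
by rewrite -cats1 -catA.
Qed.

Lemma comb_b k : forall u v,
  c (u ++ nseq k 1%N ++ 2%N :: v) = (-1) ^+ k * c (u ++ 2%N :: nseq k 1%N ++ v).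
Proof.
elim: k => [|k IH] u v; first by rewrite expr0 mul1r.
have -> : u ++ nseq k.+1 1%N ++ 2%N :: v = rcons u 1%N ++ nseq k 1%N ++ 2%N :: v.
  by rewrite -cats1 -catA.
rewrite IH.
have -> : rcons u 1%N ++ 2%N :: nseq k 1%N ++ v = u ++ [:: 1%N; 2%N] ++ (nseq k 1%N ++ v).
  by rewrite -cats1 -catA.
move/eqP: (h12 u (nseq k 1%N ++ v)); rewrite addr_eq0 => /eqP ->.
by rewrite exprS mulN1r mulrN mulNr.
Qed.
End Comb.

Definition all12 (w : seq nat) := all (fun e => (e == 1)%N || (e == 2)%N) w.

Lemma split2 w : all12 w -> (2 \in w)%N -> exists k v,
  [/\ w = nseq k 1%N ++ 2%N :: v, all12 v,
      count_mem 2%N w = (count_mem 2%N v).+1 & index 2%N w = k].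
Proof.
elim: w => //= e w IH /andP[he hw]; rewrite in_cons.
case: (eqVneq e 2%N) => [->|ne2] /= hin.
  by exists 0%N, w; split.
have e1 : e = 1%N by move: he; rewrite (negbTE ne2) orbF => /eqP.
have [k [v [-> av cv iv]]] := IH hw hin.
by exists k.+1, v; split => //=; rewrite ?iv // e1.
Qed.

Lemma all1 w : all12 w -> count_mem 2%N w = 0%N -> w = nseq (size w) 1%N.
Proof.
elim: w => //= e w IH /andP[he hw].
case: (eqVneq e 2%N) => [->|ne2] //=.
rewrite add0n => /(IH hw) {1}->.
by move: he; rewrite (negbTE ne2) orbF => /eqP ->.
Qed.

Lemma count_pos (w : seq nat) : (0 < count_mem 2%N w)%N -> (2 \in w)%N.
Proof. by rewrite -has_count has_pred1. Qed.

Arguments swap22 {K n P}.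
Arguments split2 {w}.
Arguments all1 {w}.
Arguments count_pos {w}.
Arguments comb_a {K c}.
Arguments comb_b {K c}.
Arguments swap12 {K n P}.

Lemma core (K : fieldType) n (P : seq Z5 -> K) (HP : in_Omega C512 n P)
  (hn : (2 <= n)%N) a :
  (forall w, word n w -> (2 <= count_mem 2%N w)%N -> P (epath a w) = 0) /\
  (exists lam : K, forall w, word n w -> count_mem 2%N w = 1%N ->
     P (epath a w) = (-1) ^+ (index 2%N w) * lam).
Proof.
set c := fun w => P (epath a w).
have h22 u v : c (u ++ [:: 2%N; 2%N] ++ v) = 0 := swap22 HP hn a u v.
have h12 u v : c (u ++ [:: 1%N; 2%N] ++ v) + c (u ++ [:: 2%N; 1%N] ++ v) = 0
  := swap12 HP hn a u v.
split.
  move=> w [sw aw] hc.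
  have [k [v [ew av cv _]]] := split2 aw (count_pos (leq_trans (isT : 0 < 2)%N hc)).
  have hv : (0 < count_mem 2%N v)%N by rewrite cv in hc.
  have [k' [v' [ev _ _ _]]] := split2 av (count_pos hv).
  rewrite ew ev; exact: (comb_a h22 h12 k' (nseq k 1%N) v').
exists (c (2%N :: nseq n.-1 1%N)).
move=> w [sw aw] hc.
have hp : (0 < count_mem 2%N w)%N by rewrite hc.
have [k [v [ew av cv iv]]] := split2 aw (count_pos hp).
have cv0 : count_mem 2%N v = 0%N by rewrite hc in cv; case: cv.
have ev := all1 av cv0.
move: sw; rewrite iv ew ev; set m := size v => sw.
have := comb_b h12 k [::] (nseq m 1%N); rewrite /c /= => ->.
rewrite -nseqD.
have -> : (k + m = n.-1)%N.
  move: sw; rewrite size_cat /= !size_nseq => <-; by rewrite addnS.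
by [].
Qed.

Arguments core {K n P}.

Lemma path_scanl (x : Z5) s : path C512 x s -> exists w, s = scanl stp x w /\ all12 w.
Proof.
elim: s x => [|y s IH] x /=; first by exists [::].
case/andP => hxy /IH [w [-> aw]].
case/orP: hxy => /eqP ->.
  by exists (1%N :: w); rewrite /= /stp mulr1n.
by exists (2%N :: w).
Qed.

Definition dec (s : seq Z5) : seq nat :=
  if s is h :: t then pairmap (fun p q : Z5 => val (q - p)) h t else [::].

Lemma dec_epath x w : all12 w -> dec (epath x w) = w.
Proof.
rewrite /epath -/stp.
elim: w x => [|e w IH] x // /andP[he hw].
have -> : dec (x :: scanl stp x (e :: w)) =
  val (stp x e - x) :: dec (stp x e :: scanl stp (stp x e) w) by [].
rewrite IH // /stp (addrC x) addrK.
by case/orP: he => /eqP ->.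
Qed.

Lemma count_nseq1 m : count_mem 2%N (nseq m 1%N) = 0%N.
Proof. by elim: m. Qed.

Lemma all12_nseq1 m : all12 (nseq m 1%N).
Proof. by elim: m. Qed.

Lemma decomp (K : fieldType) n a (Q : seq Z5 -> K) (HQ : in_Omega_at C512 n a Q) s :
  Q s != 0 -> exists w, [/\ s = epath a w, size w = n & all12 w].
Proof.
move=> nz; have [sz al] := HQ.1.1 s nz; have hd := HQ.2 s nz.
case: s nz sz al hd => // x s _ sz al /= hx; subst x.
have [w [ew aw]] := path_scanl _ _ al.
exists w; split => //; first by rewrite ew.
by move: sz; rewrite ew /= size_scanl => -[].
Qed.

Arguments decomp {K n a Q}.

Theorem mainTheorem2 (K : fieldType) (charK0 : [pchar K] =i pred0)
  (n : nat) (hn : (2 <= n)%N) (a : Z5) (P : seq Z5 -> K)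
  (HP : in_Omega_at C512 n a P) :
  let c := fun w => P (epath a w) in
  (* (1) words containing 22 have zero coefficient *)
  (forall u v, word n (u ++ [:: 2%N; 2%N] ++ v) ->
     c (u ++ [:: 2%N; 2%N] ++ v) = 0) /\
  (* (2) swapping an adjacent 12 <-> 21 negates the coefficient *)
  (forall u v, word n (u ++ [:: 1%N; 2%N] ++ v) ->
     c (u ++ [:: 1%N; 2%N] ++ v) + c (u ++ [:: 2%N; 1%N] ++ v) = 0) /\
  (* (3a) at least two letters 2 => zero coefficient *)
  (forall w, word n w -> (2 <= count_mem 2%N w)%N -> c w = 0) /\
  (* (3b) words with exactly one 2 are determined by a single scalar *)
  (exists lam : K, forall w, word n w -> count_mem 2%N w = 1%N ->
     c w = (-1) ^+ (index 2%N w) * lam) /\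
  (* dim Omega_n(a) <= 2 *)
  (exists b1 b2 : seq Z5 -> K, forall Q, in_Omega_at C512 n a Q ->
     exists l1 l2 : K, forall s, Q s = l1 * b1 s + l2 * b2 s).
Proof.
move=> c.
have [h3a h3b] := core HP.1 hn a.
split; first by move=> u v _; exact: (swap22 HP.1 hn a u v).
split; first by move=> u v _; exact: (swap12 HP.1 hn a u v).
split; first exact: h3a.
split; first exact: h3b.
exists (fun s => if s == epath a (nseq n 1%N) then 1 else 0).
exists (fun s => if (s == epath a (dec s)) && (size (dec s) == n) && all12 (dec s)
                    && (count_mem 2%N (dec s) == 1%N)
                 then (-1) ^+ (index 2%N (dec s)) else 0).
move=> Q HQ; have [hQa [lQ hQb]] := core HQ.1 hn a.
exists (Q (epath a (nseq n 1%N))), lQ => s.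
case: eqP => [->|ne1].
  by rewrite dec_epath ?all12_nseq1 // count_nseq1 andbF mulr1 mulr0 addr0.
rewrite mulr0 add0r.
case: ifP => [/andP[/andP[/andP[/eqP es /eqP sz] al] /eqP c1]|nc].
  have -> : Q s = Q (epath a (dec s)) by rewrite -es.
  by rewrite hQb // mulrC.
rewrite mulr0; apply/eqP/negPn/negP => nz.
have [w [ew sw aw]] := decomp HQ s nz.
move: nc; rewrite ew dec_epath // eqxx sw eqxx aw /=.
have : (count_mem 2%N w = 0 \/ count_mem 2%N w = 1 \/ 2 <= count_mem 2%N w)%N by lia.
case=> [c0|[c1|c2]].
- by move: ne1; rewrite ew {1}(all1 aw c0) sw.
- by rewrite c1 => /negbT /negP; apply.
- by move: nz; rewrite ew hQa ?eqxx //; split.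
Qed.
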